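(* For each $d\ge1$ let $B$ be a random $d\times d$ matrix with independent entries $B_{ij}\in\{0,1\}$, $\mathbb P(B_{ij}=1)=1/d$. For a positive integer $k$, let $P(k)$ be the set of set partitions of $\{1,\dots,k\}$, and let $S_k=\{(1,1),(2,1),(2,2),(3,2),\dots,(k,k),(1,k)\}$, i.e. the pairs $(t,t)$ and $(t+1,t)$ for $t=1,\dots,k$ with indices taken mod $k$ (so $k+1\equiv1$). For a pair $p_i,p_j\in P(k)$ let $p_{ij}$ be the partition of $S_k$ in which $(a_1,b_1)$ and $(a_2,b_2)$ lie in the same block if and only if $a_1,a_2$ lie in the same block of $p_i$ and $b_1,b_2$ lie in the same block of $p_j$. Writing $|p|$ for the number of blocks of a partition $p$, the $k$-th moment of the limiting averaged spectral distribution of $BB^t$, $$m_k=\lim_{d\to\infty}\frac1d\,\mathbb E_B\operatorname{tr}\big[(BB^t)^k\big],$$ equals the number of pairs $(p_i,p_j)\in P(k)\times P(k)$ with $|p_i|+|p_j|-|p_{ij}|=1$.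
   Context: $B$ is called a Bernoulli random matrix with parameter $p=1/d$; the eigenvalues of $BB^t$ are the squared singular values of $B$. *)

(* Defs.v *)
From HB Require Import structures.
From mathcomp Require Import all_boot all_order all_algebra.
From mathcomp Require Import all_classical all_reals.
From mathcomp Require Import topology normedtype sequences.
Set Implicit Arguments. Unset Strict Implicit. Unset Printing Implicit Defensive.
Import Order.TTheory GRing.Theory Num.Theory.
Local Open Scope ring_scope.

Definition bmx (R : pzRingType) {d : nat} (B : 'M[bool]_d) : 'M[R]_d :=
  \matrix_(i, j) (B i j)%:R.

Definition bern_prob (R : realType) {d : nat} (B : 'M[bool]_d) : R :=
  \prod_(i < d) \prod_(j < d) (if B i j then d%:R^-1 else 1 - d%:R^-1).

Definition avg_moment (R : realType) (k d : nat) : R :=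
  \sum_(B : 'M[bool]_d)
     bern_prob R B * (d%:R^-1 * \tr ((bmx R B *m (bmx R B)^T) ^+ k)).

(* set partitions of {1,...,k}, encoded on 'I_k = {0,...,k-1} *)
Definition setpart (k : nat) (P : {set {set 'I_k}}) : bool :=
  finset.partition P [set: 'I_k].

Definition Sk (k : nat) : {set 'I_k * 'I_k} :=
  [set x | (x.1 == x.2) || (x.1 == ordS x.2)].

Definition pij (k : nat) (pi pj : {set {set 'I_k}}) : {set {set 'I_k * 'I_k}} :=
  finset.equivalence_partition
    (fun x y : 'I_k * 'I_k =>
       (finset.pblock pi x.1 == finset.pblock pi y.1) && (finset.pblock pj x.2 == finset.pblock pj y.2))
    (Sk k).

Definition count_pairs (k : nat) : nat :=
  #|[set pq : {set {set 'I_k}} * {set {set 'I_k}} |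
      [&& setpart pq.1, setpart pq.2 &
          ((#|pq.1|%:Z + #|pq.2|%:Z - #|pij pq.1 pq.2|%:Z)%R == 1%:Z)]]|.

(* Main.v *)
Require Import Defs.
From HB Require Import structures.
From mathcomp Require Import all_boot all_order all_algebra.
From mathcomp Require Import all_classical all_reals.
From mathcomp Require Import topology normedtype sequences.
From mathcomp Require Import zify ring.
Import Order.TTheory GRing.Theory Num.Theory.
Import numFieldNormedType.Exports.
Set Implicit Arguments. Unset Strict Implicit. Unset Printing Implicit Defensive.

Section PartA.

Section Comb.

Lemma eqp_in (T : finType) (R1 R2 : rel T) (D : {set T}) :
  {in D &, forall x y, R1 x y = R2 x y} ->
  equivalence_partition R1 D = equivalence_partition R2 D.
Proof.
move=> H; apply: eq_in_imset => x Dx; apply/setP => y; rewrite !inE.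
by case Dy: (y \in D) => //=; apply: H.
Qed.

Lemma card_preim (T rT : finType) (f : T -> rT) (D : {set T}) :
  #|preim_partition f D| = #|f @: D|.
Proof.
have ->: preim_partition f D = (fun v => [set y in D | f y == v]) @: (f @: D).
  rewrite /preim_partition /equivalence_partition -imset_comp.
  by apply: eq_imset => x /=; apply/setP => y; rewrite !inE eq_sym.
rewrite card_in_imset // => u v /imsetP[x Dx ->] /imsetP[y Dy ->] /setP H.
by have := H x; rewrite !inE Dx eqxx /= => /esym/eqP.
Qed.

Definition kerp (k : nat) (T : eqType) (f : 'I_k -> T) : {set {set 'I_k}} :=
  preim_partition f [set: 'I_k].

Lemma setpart_kerp k (T : eqType) (f : 'I_k -> T) : setpart (kerp f).
Proof. exact: preim_partitionP. Qed.

Lemma pblock_kerp k (T : eqType) (f : 'I_k -> T) a b :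
  (finset.pblock (kerp f) a == finset.pblock (kerp f) b) = (f a == f b).
Proof.
have P := setpart_kerp f.
rewrite eq_pblock ?(partition_trivIset P) ?(cover_partition P) ?inE //.
rewrite /kerp /preim_partition pblock_equivalence_partition ?inE //.
by split=> // /eqP->.
Qed.

Definition Eset k (T1 T2 : finType) (i : 'I_k -> T1) (j : 'I_k -> T2) :=
  [set (i x.1, j x.2) | x in Sk k].

Lemma card_pij_kerp k (T1 T2 : finType) (i : 'I_k -> T1) (j : 'I_k -> T2) :
  #|pij (kerp i) (kerp j)| = #|Eset i j|.
Proof.
rewrite /Eset -(card_preim (fun x => (i x.1, j x.2))).
suff ->: pij (kerp i) (kerp j) = preim_partition (fun x => (i x.1, j x.2)) (Sk k) by [].
by apply: eqp_in => x y _ _ /=; rewrite !pblock_kerp xpair_eqE.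
Qed.

Lemma kerp_pblock k (pi : {set {set 'I_k}}) : setpart pi -> kerp (finset.pblock pi) = pi.
Proof. exact: preim_partition_pblock. Qed.

Lemma card_kerp k (T : finType) (f : 'I_k -> T) : #|kerp f| = #|f @: [set: 'I_k]|.
Proof. exact: card_preim. Qed.

End Comb.

End PartA.

Section PartB.

Section Graph.
Variables (T1 T2 : finType) (x : nat -> T1) (y : nat -> T2).

Fixpoint Aset m : {set T1} := if m is m'.+1 then x m |: Aset m' else [set x 0].
Fixpoint Bset m : {set T2} := if m is m'.+1 then y m' |: Bset m' else finset.set0.
Fixpoint Eg m : {set T1 * T2} :=
  if m is m'.+1 then (x m, y m') |: ((x m', y m') |: Eg m') else finset.set0.

Lemma memA m t : (t <= m)%N -> x t \in Aset m.
Proof.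
elim: m => [|m IH] /=; first by rewrite leqn0 => /eqP->; rewrite inE.
rewrite leq_eqVlt => /orP[/eqP->|]; first by rewrite setU11.
by rewrite ltnS => /IH H; rewrite setU1r.
Qed.

Lemma memB m t : (t < m)%N -> y t \in Bset m.
Proof.
elim: m => [|m IH] //=.
rewrite ltnS leq_eqVlt => /orP[/eqP->|]; first by rewrite setU11.
by move=> /IH H; rewrite setU1r.
Qed.

Lemma Einv m e : e \in Eg m -> (e.1 \in Aset m) && (e.2 \in Bset m).
Proof.
elim: m e => [|m IH] e /=; first by rewrite [e \in _]finset.in_set0.
rewrite !inE => /orP[/eqP->|/orP[/eqP->|/IH/andP[H1 H2]]] /=.
- by rewrite !eqxx.
- by rewrite eqxx memA ?orbT.
- by rewrite H1 H2 !orbT.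
Qed.

Lemma graph_ineq m : (#|Aset m| + #|Bset m| <= #|Eg m| + 1)%N.
Proof.
elim: m => [|m IH] /=; first by rewrite cards1 !finset.cards0.
rewrite !cardsU1.
have h1 : ((y m \notin Bset m) <= ((x m, y m) \notin Eg m))%N.
  case E: ((x m, y m) \in Eg m); last exact: leq_b1.
  by move: (Einv E) => /andP[_ ->].
have h2 : ((x m.+1 \notin Aset m) <= ((x m.+1, y m) \notin (x m, y m) |: Eg m))%N.
  case HE: ((x m.+1, y m) \in (x m, y m) |: Eg m); last exact: leq_b1.
  move: HE; rewrite !inE => /orP[/eqP [->]|/Einv/andP[H _]] /=.
    by rewrite memA.
  by rewrite H.
have eq1 (a A b B : nat) : (a + A + (b + B) = (A + B) + (a + b))%N by lia.
have eq2 (a b E : nat) : (a + (b + E) + 1 = (E + 1) + (a + b))%N by lia.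
by rewrite eq1 eq2; apply: leq_add => //; apply: leq_add.
Qed.

Lemma Eg_sub (S : {set T1 * T2}) m :
  (forall t, (x t, y t) \in S) -> (forall t, (x t.+1, y t) \in S) -> Eg m \subset S.
Proof.
move=> H1 H2; elim: m => [|m IH] /=; first exact: finset.sub0set.
by rewrite !finset.subUset !finset.sub1set H1 H2 IH.
Qed.

End Graph.

Lemma graph_bound k' (T1 T2 : finType) (i : 'I_k'.+1 -> T1) (j : 'I_k'.+1 -> T2) :
  (#|i @: [set: 'I_k'.+1]| + #|j @: [set: 'I_k'.+1]| <= #|Eset i j| + 1)%N.
Proof.
pose x t := i (inord (t %% k'.+1)); pose y t := j (inord (t %% k'.+1)).
have hval (a : 'I_k'.+1) : inord (a %% k'.+1) = a.
  by rewrite modn_small // inord_val.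
apply: (leq_trans _ (leq_trans (graph_ineq x y k'.+1) _)).
  apply: leq_add; apply: subset_leq_card; apply/fintype.subsetP => _ /imsetP[a _ ->].
    by rewrite -(hval a); apply: memA; rewrite ltnW.
  by rewrite -(hval a); apply: memB.
rewrite leq_add2r; apply: subset_leq_card; apply: Eg_sub => t.
  by apply/imsetP; exists (inord (t %% k'.+1), inord (t %% k'.+1)) => //; rewrite inE eqxx.
apply/imsetP; exists (inord (t.+1 %% k'.+1), inord (t %% k'.+1)) => //.
rewrite inE /=; apply/orP; right; apply/eqP/val_inj => /=.
rewrite !inordK ?ltn_pmod // -addn1 -modnDml addn1. done.
Qed.

Lemma part_bound k' (pi pj : {set {set 'I_k'.+1}}) :
  setpart pi -> setpart pj -> (#|pi| + #|pj| <= #|pij pi pj| + 1)%N.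
Proof.
move=> Hi Hj; have := graph_bound (finset.pblock pi) (finset.pblock pj).
by rewrite -(card_kerp (finset.pblock pi)) -(card_kerp (finset.pblock pj)) -card_pij_kerp !kerp_pblock.
Qed.

End PartB.

Section PartC.

Lemma card_kerp_eq k' n (pi : {set {set 'I_k'.+1}}) : setpart pi ->
  #|[set i : {ffun 'I_k'.+1 -> 'I_n} | kerp i == pi]| = n ^_ #|pi|.
Proof.
move=> Hpi.
have cov : finset.cover pi = [set: 'I_k'.+1] by apply: cover_partition.
have pbP a : finset.pblock pi a \in pi by apply: pblock_mem; rewrite cov inE.
have x0P := pbP ord0.
pose rk := enum_rank_in x0P.
pose Phi (g : {ffun 'I_(#|pi|)%N -> 'I_n}) := [ffun a => g (rk (finset.pblock pi a))].
pose rep (X : {set 'I_k'.+1}) := odflt ord0 [pick a in X].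
have repP X : X \in pi -> rep X \in X.
  move=> XP; rewrite /rep; case: pickP => [a //|H].
  have /set0Pn[a Xa] := partition_neq0 Hpi XP.
  by have := H a; rewrite Xa.
have blk X : X \in pi -> finset.pblock pi (rep X) = X.
  by move=> XP; apply: def_pblock (partition_trivIset Hpi) XP (repP X XP).
have rkK : {in pi, cancel rk enum_val} := enum_rankK_in x0P.
have valK : cancel enum_val rk := enum_valK_in x0P.
have Phi_inj : injective Phi.
  move=> g g' /ffunP H; apply/ffunP => r.
  by have := H (rep (enum_val r)); rewrite !ffunE blk ?enum_valP // valK.
have := card_inj_ffuns 'I_(#|pi|)%N 'I_n; rewrite !card_ord => <-.
rewrite -(card_imset _ Phi_inj); apply: eq_card => i.
rewrite inE; apply/eqP/imsetP => [Hk|[g gi ->]].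
  exists [ffun r => i (rep (enum_val r))].
    rewrite inE; apply/fintype.injectiveP => r1 r2; rewrite !ffunE => /eqP.
    rewrite -pblock_kerp Hk !blk ?enum_valP // => /eqP/enum_val_inj.
    done.
  apply/ffunP => a; rewrite !ffunE rkK ?pbP //.
  by apply/eqP; rewrite -pblock_kerp Hk blk ?pbP.
rewrite inE in gi; move/fintype.injectiveP in gi.
rewrite -[RHS](kerp_pblock Hpi) /kerp /preim_partition.
apply: eqp_in => a b _ _; rewrite !ffunE (inj_eq gi).
apply/eqP/eqP => [H|->//].
by rewrite -(rkK _ (pbP a)) H rkK.
Qed.

End PartC.

Section PartD.
Local Open Scope ring_scope.

Lemma prod_bool (R : comPzSemiRingType) (I : finType) (A : pred I) (b : I -> bool) :
  \prod_(i in A) ((b i)%:R : R) = ([forall i in A, b i])%:R.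
Proof.
case E: [forall i in A, b i].
  by apply: big1 => i Ai; move/forall_inP: E => /(_ i Ai) ->.
move/negbT: E => /forall_inPn [i Ai nbi].
by rewrite (bigD1 i) //= (negbTE nbi) mul0r.
Qed.

Lemma mx_indep (R : comPzSemiRingType) d (H : 'I_d -> 'I_d -> bool -> R) :
  \sum_(B : 'M[bool]_d) \prod_r \prod_c H r c (B r c) =
  \prod_r \prod_c (H r c true + H r c false).
Proof.
have e1 r : \prod_c (H r c true + H r c false) =
    \sum_(g : {ffun 'I_d -> bool}) \prod_c H r c (g c).
  by rewrite -bigA_distr_bigA; apply: eq_bigr => c _; rewrite big_bool.
rewrite (eq_bigr _ (fun r _ => e1 r)) bigA_distr_bigA /=.
pose h (f : {ffun 'I_d -> {ffun 'I_d -> bool}}) : 'M[bool]_d := \matrix_(r, c) f r c.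
have hb : bijective h.
  exists (fun B : 'M[bool]_d => [ffun r => [ffun c => B r c]]).
    by move=> f; apply/ffunP => r; apply/ffunP => c; rewrite !ffunE mxE.
  by move=> B; apply/matrixP => r c; rewrite mxE !ffunE.
rewrite (reindex h) /=; last by apply: onW_bij.
by apply: eq_bigr => f _; apply: eq_bigr => r _; apply: eq_bigr => c _; rewrite mxE.
Qed.

Lemma indep (R : realType) d (E : {set 'I_d * 'I_d}) :
  \sum_(B : 'M[bool]_d) bern_prob R B * ([forall rc in E, B rc.1 rc.2])%:R
  = (d%:R^-1) ^+ #|E|.
Proof.
set q : R := d%:R^-1.
pose H r c (b : bool) : R := (if b then q else 1 - q) * (if (r, c) \in E then b%:R else 1).
have e1 (B : 'M[bool]_d) : bern_prob R B * ([forall rc in E, B rc.1 rc.2])%:R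
    = \prod_r \prod_c H r c (B r c).
  rewrite /H.
  under [RHS]eq_bigr do rewrite big_split /=.
  rewrite big_split /=; congr (_ * _).
  rewrite -prod_bool pair_big /= big_mkcond /=.
  by apply: eq_bigr => [[r c]] _ /=; case: ((r, c) \in E).
rewrite (eq_bigr _ (fun B _ => e1 B)) mx_indep /H.
have e2 r c : (q * (if (r, c) \in E then true%:R else 1) +
   (1 - q) * (if (r, c) \in E then false%:R else 1)) = if (r, c) \in E then q else 1.
  by case: ((r, c) \in E); rewrite /= ?mulr1 ?mulr0 ?addr0 // addrC subrK.
under eq_bigr do under eq_bigr do rewrite e2.
rewrite pair_big /= -big_mkcond /=.
by rewrite -prodr_const; apply: eq_bigl => -[r c].
Qed.

End PartD.

Section PartE.
Local Open Scope ring_scope.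

Definition ext m (T : Type) (y : {ffun 'I_m -> T}) (c : T) : {ffun 'I_m.+1 -> T} :=
  [ffun t => if unlift ord_max t is Some t' then y t' else c].

Lemma split_sum (R : comPzSemiRingType) m (T : finType) (F : {ffun 'I_m.+1 -> T} -> R) :
  \sum_x F x = \sum_(y : {ffun 'I_m -> T}) \sum_(c : T) F (ext y c).
Proof.
rewrite pair_big /=.
pose h (p : {ffun 'I_m -> T} * T) := ext p.1 p.2.
have hb : bijective h.
  exists (fun x : {ffun 'I_m.+1 -> T} => ([ffun t => x (lift ord_max t)], x ord_max)).
    move=> [y c] /=; rewrite /h /ext /= ffunE unlift_none; congr (_, _).
    by apply/ffunP => t; rewrite !ffunE liftK.
  move=> x; rewrite /h /ext /=; apply/ffunP => t; rewrite ffunE.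
  by case: unliftP => [t' ->|->]; rewrite ?ffunE.
by rewrite (reindex h) //=; apply: onW_bij.
Qed.

Lemma sum_if1 (R : comPzSemiRingType) (T : finType) (u : T) (F : T -> R) :
  \sum_i (if i == u then F i else 0) = F u.
Proof.
rewrite (bigD1 u) //= eqxx big1 ?addr0 // => i /negbTE ->; done.
Qed.

Lemma sum_if2 (R : comPzSemiRingType) (T : finType) (u v : T) (P : R) :
  \sum_i (if (u == i) && (v == i) then P else 0) = if v == u then P else 0.
Proof.
rewrite (bigD1 u) //= eqxx /= big1 ?addr0 // => i /negbTE.
by rewrite eq_sym => ->.
Qed.

Lemma ext_lo m (T : Type) (y : {ffun 'I_m.+1 -> T}) c t :
  (t <= m)%N -> ext y c (inord t) = y (inord t).
Proof.
move=> tm; rewrite ffunE; case: unliftP => [t'|] /(congr1 val) /=; rewrite inordK ?ltnS ?(leq_trans tm) //.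
  by rewrite /bump leqNgt (ltn_ord t') add0n => ->; rewrite inord_val.
by move=> e; move: tm; rewrite e ltnn.
Qed.

Lemma ext_hi m (T : Type) (y : {ffun 'I_m.+1 -> T}) c :
  ext y c (inord m.+1) = c.
Proof.
rewrite ffunE; case: unliftP => [t'|] //= /(congr1 val) /=; rewrite inordK //.
by rewrite /bump leqNgt (ltn_ord t') add0n => e; have := ltn_ord t'; rewrite -e ltnn.
Qed.

Lemma mxpow_path (R : comPzRingType) d (M : 'M[R]_d) m a b :
  (M ^+ m) a b = \sum_(x : {ffun 'I_m.+1 -> 'I_d} | (x (inord 0) == a) && (x (inord m) == b))
     \prod_(t < m) M (x (inord t)) (x (inord t.+1)).
Proof.
elim: m a b => [|m IH] a b.
  rewrite expr0 mxE big_mkcond /= split_sum.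
  have -> : (inord 0 : 'I_1) = ord_max by apply: val_inj; rewrite /= inordK.
  under eq_bigr do under eq_bigr do rewrite !(ffunE, unlift_none) /= big_ord0.
  have e : \sum_(c : 'I_d) (if (c == a) && (c == b) then 1 else 0) = (a == b)%:R :> R.
    rewrite (bigD1 a) //= eqxx /= big1 => [|c /negbTE -> //]; rewrite addr0.
    by case: (a == b).
  under eq_bigr do rewrite e.
  by rewrite sumr_const card_ffun !card_ord expn0.
have hp (y : {ffun 'I_m.+1 -> 'I_d}) c :
    \prod_(t < m.+1) M (ext y c (inord t)) (ext y c (inord t.+1))
    = (\prod_(t < m) M (y (inord t)) (y (inord t.+1))) * M (y (inord m)) c.
  rewrite big_ord_recr /= ext_lo // ext_hi; congr (_ * _).
  by apply: eq_bigr => t _; rewrite !ext_lo ?(ltnW (ltn_ord t)) ?(ltn_ord t).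
rewrite exprSr -mulmxE mxE.
under eq_bigr do rewrite IH mulr_suml big_mkcond.
rewrite exchange_big /= [RHS]big_mkcond [RHS]split_sum.
apply: eq_bigr => y _.
under [RHS]eq_bigr do rewrite ext_lo // hp ext_hi.
case: (y (inord 0) == a) => /=; last by rewrite !big1.
rewrite [RHS]sum_if1; under eq_bigr do rewrite eq_sym.
by rewrite sum_if1.
Qed.

Lemma tr_path (R : comPzRingType) d (M : 'M[R]_d) k' :
  \tr (M ^+ k'.+1) = \sum_(y : {ffun 'I_k'.+1 -> 'I_d}) \prod_(t : 'I_k'.+1) M (y t) (y (ordS t)).
Proof.
rewrite /mxtrace.
under eq_bigr do rewrite mxpow_path big_mkcond.
rewrite exchange_big /= split_sum.
apply: eq_bigr => y _.
under [LHS]eq_bigr do rewrite ext_lo // ext_hi.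
under [LHS]eq_bigr do rewrite sum_if2.
rewrite sum_if1.
apply: eq_bigr => t _.
have eS : ordS t = inord (t.+1 %% k'.+1) by apply: val_inj; rewrite /= inordK ?ltn_pmod.
rewrite (@ext_lo k' _ _ _ t (ltn_ord t)) inord_val.
case: (ltnP t k') => ht.
  by rewrite ext_lo // eS modn_small.
have e : (t : nat) = k' by apply/eqP; rewrite eqn_leq ht -ltnS ltn_ord.
by rewrite eS e ext_hi modnn.
Qed.

End PartE.

Section PartF.
Local Open Scope ring_scope.

Lemma prod_bool' (R : comPzSemiRingType) (I : finType) (b : I -> bool) :
  \prod_i ((b i)%:R : R) = ([forall i, b i])%:R.
Proof.
case E: [forall i, b i].
  by apply: big1 => i _; move/fintype.forallP: E => /(_ i) ->.
move/negbT: E => /forallPn [i nbi].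
by rewrite (bigD1 i) //= (negbTE nbi) mul0r.
Qed.

Lemma prod_B (R : comPzSemiRingType) k' d (B : 'M[bool]_d) (y j : {ffun 'I_k'.+1 -> 'I_d}) :
  \prod_t (((B (y t) (j t))%:R : R) * (B (y (ordS t)) (j t))%:R)
  = ([forall rc in Eset y j, B rc.1 rc.2])%:R.
Proof.
under eq_bigr do rewrite -natrM mulnb.
rewrite prod_bool'; congr (_ %:R).
congr (nat_of_bool _); apply/idP/idP.
  move/fintype.forallP => H; apply/forall_inP => rc /imsetP[[a b] /= Sab ->] /=.
  move: Sab; rewrite inE /= => /orP[] /eqP ->; by have /andP[] := H b.
move/forall_inP => H; apply/fintype.forallP => t; apply/andP; split.
  by apply: (H (_, _)); apply/imsetP; exists (t, t); rewrite ?inE ?eqxx.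
by apply: (H (_, _)); apply/imsetP; exists (ordS t, t); rewrite ?inE ?eqxx ?orbT.
Qed.

Lemma avg_expand (R : realType) k' d :
  avg_moment R k'.+1 d = d%:R^-1 * \sum_(y : {ffun 'I_k'.+1 -> 'I_d})
     \sum_(j : {ffun 'I_k'.+1 -> 'I_d}) (d%:R^-1) ^+ #|Eset y j|.
Proof.
rewrite /avg_moment.
have e1 (B : 'M[bool]_d) : \tr ((bmx R B *m (bmx R B)^T) ^+ k'.+1) =
    \sum_(y : {ffun 'I_k'.+1 -> 'I_d}) \sum_(j : {ffun 'I_k'.+1 -> 'I_d})
       ([forall rc in Eset y j, B rc.1 rc.2])%:R.
  rewrite tr_path; apply: eq_bigr => y _.
  under eq_bigr do rewrite mxE.
  rewrite bigA_distr_bigA; apply: eq_bigr => j _.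
  by rewrite -prod_B; apply: eq_bigr => t _; rewrite !mxE.
under eq_bigr do rewrite e1 mulrCA.
rewrite -mulr_sumr; congr (_ * _).
under eq_bigr do rewrite mulr_sumr.
rewrite exchange_big; apply: eq_bigr => y _.
under eq_bigr do rewrite mulr_sumr.
rewrite exchange_big; apply: eq_bigr => j _.
by rewrite indep.
Qed.

End PartF.

Section PartG.
Local Open Scope ring_scope.

Lemma sum_kerp (R : realType) k' d (F : {set {set 'I_k'.+1}} -> R) :
  \sum_(y : {ffun 'I_k'.+1 -> 'I_d}) F (kerp y) =
  \sum_(pi | setpart pi) (d ^_ #|pi|)%:R * F pi.
Proof.
rewrite (partition_big (fun y : {ffun 'I_k'.+1 -> 'I_d} => kerp y) (@setpart k'.+1)) /=;
  last by move=> y _; apply: setpart_kerp.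
apply: eq_bigr => pi Hpi.
transitivity (\sum_(y in [set y : {ffun 'I_k'.+1 -> 'I_d} | kerp y == pi]) F pi).
  by apply: eq_big => [y|y]; rewrite ?inE // => /eqP->.
by rewrite sumr_const (card_kerp_eq d Hpi) mulr_natl.
Qed.

Lemma avg_parts (R : realType) k' d :
  avg_moment R k'.+1 d = \sum_(pi : {set {set 'I_k'.+1}} | setpart pi) \sum_(pj | setpart pj)
    (d ^_ #|pi|)%:R * (d ^_ #|pj|)%:R * (d%:R^-1 * (d%:R^-1) ^+ #|pij pi pj|).
Proof.
rewrite avg_expand.
under eq_bigr => y _ do under eq_bigr => j _ do rewrite -card_pij_kerp.
under eq_bigr => y _ do rewrite (sum_kerp d (fun pj => (d%:R^-1 : R) ^+ #|pij (kerp y) pj|)).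
rewrite (sum_kerp d (fun pi => \sum_(pj | setpart pj) (d ^_ #|pj|)%:R * (d%:R^-1 : R) ^+ #|pij pi pj|)).
rewrite mulr_sumr; apply: eq_bigr => pi _.
rewrite mulrCA mulr_sumr mulr_sumr; apply: eq_bigr => pj _.
set a := (d ^_ #|pi|)%:R; set b := (d ^_ #|pj|)%:R; set q := d%:R^-1; set c := q ^+ _.
by rewrite (mulrCA q b c) mulrA.
Qed.

End PartG.

Section PartH.
Local Open Scope ring_scope.
Local Open Scope classical_set_scope.

Lemma cvg_sumr (R : realType) (I : Type) (r : seq I) (P : pred I) (f : I -> nat -> R) (l : I -> R) :
  (forall i, P i -> f i n @[n --> \oo] --> l i) ->
  (\sum_(i <- r | P i) f i n) @[n --> \oo] --> \sum_(i <- r | P i) l i.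
Proof.
move=> H; elim: r => [|i r IH].
  rewrite big_nil; under eq_fun do rewrite big_nil; exact: cvg_cst.
rewrite big_cons; under eq_fun do rewrite big_cons.
case: (P i) (H i) => [Hi|_]; last exact: IH.
exact: cvgD (Hi isT) IH.
Qed.

Lemma cvg_exprn (R : realType) (f : nat -> R) (l : R) m :
  f n @[n --> \oo] --> l -> (f n ^+ m) @[n --> \oo] --> l ^+ m.
Proof.
move=> H; elim: m => [|m IH].
  rewrite expr0; under eq_fun do rewrite expr0; exact: cvg_cst.
rewrite exprS; under eq_fun do rewrite exprS.
exact: cvgM.
Qed.

Lemma harm_cvg (R : realType) : (n.+1%:R^-1 : R) @[n --> \oo] --> 0.
Proof. exact: cvg_harmonic. Qed.

Lemma ratio_cvg (R : realType) a :
  (((n.+1 - a)%:R : R) / n.+1%:R) @[n --> \oo] --> (1 : R).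
Proof.
have H : (1 - a%:R * n.+1%:R^-1 : R) @[n --> \oo] --> (1 : R).
  rewrite -[X in _ --> X]subr0 -(mulr0 a%:R).
  apply: cvgB; first exact: cvg_cst.
  apply: cvgM; [exact: cvg_cst | exact: harm_cvg].
apply: cvg_trans H; apply: near_eq_cvg; near=> n.
have han : (a <= n.+1)%N by near: n; exists a => // m /= ham; apply: leqW.
rewrite natrB // mulrBl divff ?mul1r //.
by rewrite pnatr_eq0.
Unshelve. all: by end_near.
Qed.

Lemma ff_lim (R : realType) a :
  (((n.+1 ^_ a)%:R : R) / n.+1%:R ^+ a) @[n --> \oo] --> (1 : R).
Proof.
elim: a => [|a IH].
  under eq_fun do rewrite ffactn0 expr0 divr1.
  exact: cvg_cst.
under eq_fun do rewrite ffactnSr natrM exprSr invfM mulrACA.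
have H := cvgM IH (ratio_cvg (R:=R) a); rewrite mulr1 in H.
exact: H.
Qed.

Lemma term_lim (R : realType) a b c : (a + b <= c + 1)%N ->
  (((n.+1 ^_ a)%:R : R) * (n.+1 ^_ b)%:R * (n.+1%:R^-1 * (n.+1%:R^-1) ^+ c))
     @[n --> \oo] --> (((a + b == c + 1)%N)%:R : R).
Proof.
move=> hab.
set e := (c + 1 - (a + b))%N.
have ce : (c.+1 = a + b + e)%N by rewrite /e; lia.
have eq n : ((n.+1 ^_ a)%:R : R) * (n.+1 ^_ b)%:R * (n.+1%:R^-1 * (n.+1%:R^-1) ^+ c)
   = ((n.+1 ^_ a)%:R / n.+1%:R ^+ a) * ((n.+1 ^_ b)%:R / n.+1%:R ^+ b) * (n.+1%:R^-1) ^+ e.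
  rewrite -exprS ce !exprD -!exprVn.
  set A := (_ ^_ a)%:R; set B := (_ ^_ b)%:R; set qa := _ ^+ a; set qb := _ ^+ b.
  by rewrite !mulrA; congr (_ * _); rewrite -!mulrA; congr (_ * _); rewrite mulrCA.
under eq_fun do rewrite eq.
have -> : (((a + b == c + 1)%N)%:R : R) = 1 * 1 * 0 ^+ e.
  rewrite !mul1r expr0n /e; congr (_%:R).
  by apply/eqP/eqP; lia.
apply: cvgM; first exact: cvgM (ff_lim (R:=R) a) (ff_lim (R:=R) b).
exact: cvg_exprn (harm_cvg (R:=R)).
Qed.

End PartH.

Section PartI.
Local Open Scope ring_scope.

Lemma count_eq (R : realType) k' :
  ((count_pairs k'.+1)%:R : R) =
  \sum_(pi : {set {set 'I_k'.+1}} | setpart pi) \sum_(pj | setpart pj)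
     (((#|pi| + #|pj| == #|pij pi pj| + 1)%N)%:R : R).
Proof.
rewrite pair_big /= /count_pairs -sum1_card natr_sum.
rewrite [LHS]big_mkcond [RHS]big_mkcond; apply: eq_bigr => -[pi pj] _ /=.
rewrite inE /=.
have -> : ((#|pi|%:Z + #|pj|%:Z - #|pij pi pj|%:Z)%R == 1%:Z) =
   (#|pi| + #|pj| == #|pij pi pj| + 1)%N by apply/eqP/eqP; lia.
by case: (setpart pi); case: (setpart pj); case: (_ == _).
Qed.


End PartI.

Local Open Scope classical_set_scope.
Local Open Scope ring_scope.

Theorem proposition1 (R : realType) (k : nat) (hk : (0 < k)%N) :
  (fun n : nat => avg_moment R k n.+1) @ \oo --> ((count_pairs k)%:R : R).
Proof.
case: k hk => [//|k'] _.
rewrite count_eq.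
under eq_fun do rewrite avg_parts.
apply: cvg_sumr => pi Hpi.
apply: cvg_sumr => pj Hpj.
exact: term_lim (part_bound Hpi Hpj).
Qed.
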